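(* Let $\mathcal C$ be a Clifford circuit with $m$ measurements. The map $\mathbb Z_2^m\to\overline{\mathcal P}_{n(\Delta+1)}$, $u\mapsto\overleftarrow{F(u)}$, is an injective group morphism.
   Context: A Clifford circuit on $n$ qubits is a finite sequence of operations, each a unitary Clifford gate or the measurement of a Hermitian $n$-qubit Pauli, each with a level in $\{1,2,\dots\}$; operations of equal level have disjoint supports and levels are nondecreasing; depth $\Delta$ = maximal level. In circuit order the $j$-th measurement measures $S_j$ at level $\ell_j$, $j=1,\dots,m$. $\overline{\mathcal P}_N$ is the $N$-qubit Pauli group modulo phases. $U_\ell$ is the product of the unitary gates of level $\ell$ (identity if none). A fault operator $F\in\overline{\mathcal P}_{n(\Delta+1)}$ acts on qubits $(\ell+0.5,q)$, $0\le\ell\le\Delta$, $1\le q\le n$; $F_{\ell+0.5}$ is its level-$(\ell+0.5)$ component; $\eta_{\ell+0.5}(P)$ is the fault operator equal to $P\in\overline{\mathcal P}_n$ at level $\ell+0.5$ and $I$ elsewhere. Back-cumulant $\overleftarrow F$: start with $\overleftarrow F=F$; for $\ell=\Delta,\dots,1$ replace $\overleftarrow F_{\ell-0.5}$ by $\overleftarrow F_{\ell-0.5}\cdot U_\ell^{-1}\overleftarrow F_{\ell+0.5}U_\ell$. For $u\in\mathbb Z_2^m$, $F(u)=\prod_{j=1}^m\eta_{\ell_j-0.5}(S_j^{u_j})$. *)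

(* Defs.v *)
From HB Require Import structures.
From mathcomp Require Import all_boot all_order all_algebra.
Set Implicit Arguments. Unset Strict Implicit. Unset Printing Implicit Defensive.
Import GRing.Theory.
Local Open Scope ring_scope.

(* n-qubit Pauli operators modulo phases: each qubit carries (x,z) in F_2^2;
   multiplication modulo phases is componentwise addition. *)
Definition pauli (n : nat) := {ffun 'I_n -> 'F_2 * 'F_2}.

Definition psupport n (P : pauli n) : {set 'I_n} := [set q | P q != 0].

(* symplectic form: commutation (0) / anticommutation (1) *)
Definition symp n (P Q : pauli n) : 'F_2 :=
  \sum_(q < n) ((P q).1 * (Q q).2 + (P q).2 * (Q q).1).

(* g : P |-> G^{-1} P G (modulo phases) is the conjugation action of a
   unitary Clifford gate G supported on A (G = G_A (x) I).  The mod-phase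
   conjugation actions of Clifford unitaries are exactly the symplectic
   automorphisms of F_2^{2n}; G acting trivially outside A means g fixes Paulis
   supported outside A and maps Paulis supported in A into Paulis supported in A. *)
Definition clifford_action n (A : {set 'I_n}) (g : pauli n -> pauli n) : Prop :=
  [/\ {morph g : P Q / P + Q},
      bijective g,
      (forall P Q, symp (g P) (g Q) = symp P Q),
      (forall P, [disjoint psupport P & A] -> g P = P) &
      (forall P, psupport P \subset A -> psupport (g P) \subset A)].

Inductive op (n : nat) :=
| Gate of {set 'I_n} & (pauli n -> pauli n)
| Meas of pauli n.

Definition op_support n (o : op n) : {set 'I_n} :=
  match o with Gate A _ => A | Meas Sm => psupport Sm end.

(* a circuit: the list of its operations in circuit order, each with a level *)
Definition circuit (n : nat) := seq (op n * nat).

Definition in_circ n (o : op n * nat) (c : circuit n) : Prop :=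
  exists2 i, (i < size c)%N & nth (Meas 0, 0%N) c i = o.

Definition valid_circuit n (c : circuit n) : Prop :=
  [/\ all (fun o => 0 < o.2)%N c,
      sorted (fun a b : op n * nat => a.2 <= b.2)%N c,
      (forall i j, (i < j < size c)%N ->
         (nth (Meas 0, 0%N) c i).2 = (nth (Meas 0, 0%N) c j).2 ->
         [disjoint op_support (nth (Meas 0, 0%N) c i).1
                 & op_support (nth (Meas 0, 0%N) c j).1]),
      (forall A g l, in_circ (Gate A g, l) c -> clifford_action A g) &
      (forall Sm l, in_circ (Meas Sm, l) c -> Sm != 0)].

Definition depth n (c : circuit n) : nat := foldr (fun o d => maxn o.2 d) 0%N c.

Definition meas_list n (c : circuit n) : seq (pauli n * nat) :=
  pmap (fun o : op n * nat => if o.1 is Meas Sm then Some (Sm, o.2) else None) c.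

Definition nmeas n (c : circuit n) : nat := size (meas_list c).

Definition meas_S n (c : circuit n) (j : nat) : pauli n := (nth (0, 0%N) (meas_list c) j).1.
Definition meas_l n (c : circuit n) (j : nat) : nat := (nth (0, 0%N) (meas_list c) j).2.

(* P |-> U_l^{-1} P U_l, U_l the product of the gates of level l *)
Definition gates_at n (c : circuit n) (l : nat) : seq (pauli n -> pauli n) :=
  pmap (fun o : op n * nat =>
          if o.1 is Gate _ g then (if o.2 == l then Some g else None) else None) c.

Definition conjU n (c : circuit n) (l : nat) (P : pauli n) : pauli n :=
  foldl (fun Q g => g Q) P (gates_at c l).

(* fault operators: component i : 'I_(Delta+1) is the level (i+0.5) part *)
Definition fault n (c : circuit n) := {ffun 'I_(depth c).+1 -> pauli n}.

Definition back_step n (c : circuit n) (l : nat) (F : fault c) : fault c :=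
  [ffun i : 'I_(depth c).+1 =>
     if nat_of_ord i == l.-1 then F i + conjU c l (F (inord l)) else F i].

Definition back_cumulant n (c : circuit n) (F : fault c) : fault c :=
  foldl (fun G l => @back_step n c l G) F (rev (iota 1 (depth c))).

Definition F_of n (c : circuit n) (u : {ffun 'I_(nmeas c) -> 'F_2}) : fault c :=
  [ffun i : 'I_(depth c).+1 =>
     \sum_(j < nmeas c | (meas_l c j).-1 == nat_of_ord i)
        (if u j == 1 then meas_S c j else 0)].

(* Main.v *)
Require Import Defs.
From mathcomp Require Import all_boot all_order all_algebra.
Import GRing.Theory.
Set Implicit Arguments. Unset Strict Implicit. Unset Printing Implicit Defensive.
Local Open Scope ring_scope.

Lemma F2_self (x : 'F_2) : x + x = 0.
Proof. case: x => -[|[|//]] ? ; by apply/val_inj. Qed.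

Lemma F2_cases (x : 'F_2) : x = 0 \/ x = 1.
Proof. case: x => -[|[|//]] ?; [left|right]; by apply/val_inj. Qed.

Lemma pauli_self n (P : pauli n) : P + P = 0.
Proof.
apply/ffunP => q; rewrite !ffunE.
case: (P q) => a b; by rewrite /GRing.add /= /add_pair /= !F2_self.
Qed.

Lemma fault_self n (c : circuit n) (F : fault c) : F + F = 0.
Proof. apply/ffunP => i; rewrite !ffunE; exact: pauli_self. Qed.

Lemma pmap_idx (T U : Type) (f : T -> option U) (s : seq T) x0 y0 j :
  (j < size (pmap f s))%N -> exists i, [/\ (i < size s)%N,
    f (nth x0 s i) = Some (nth y0 (pmap f s) j) &
    j = count (fun x => isSome (f x)) (take i s)].
Proof.
elim: s j => [|a s IH] j //=.
case E: (f a) => [u|] /=.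
  case: j => [|j] /= Hj.
    by exists 0%N; rewrite /= E; split.
  have [i [H1 H2 H3]] := IH j Hj. by exists i.+1; split => //=; rewrite E -H3.
move=> Hj; have [i [H1 H2 H3]] := IH j Hj.
by exists i.+1; split => //=; rewrite E -H3.
Qed.

Lemma depth_ge n (s : circuit n) i : (i < size s)%N ->
  ((nth (Meas 0%R, 0%N) s i).2 <= depth s)%N.
Proof.
elim: s i => [|a s IH] [|i] //= H.
  exact: leq_maxl.
exact: leq_trans (IH i H) (leq_maxr _ _).
Qed.

Lemma conjU_morph n (s : circuit n) l :
  (forall i A g, (i < size s)%N -> (nth (Meas 0%R, 0%N) s i).1 = Gate A g ->
     {morph g : P Q / P + Q}) ->
  {morph conjU s l : P Q / P + Q}.
Proof.
rewrite /conjU /gates_at.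
elim: s => [|a s IH] Hg P Q //=.
have IH' := IH (fun i A g Hi => Hg i.+1 A g Hi).
case: a Hg => [[A g|Sm] l'] Hg //=.
case: (l' == l) => //=.
by rewrite (Hg 0%N A g).
Qed.

Lemma back_step_morph n (c : circuit n) l :
  {morph conjU c l : P Q / P + Q} ->
  {morph @back_step n c l : F G / F + G}.
Proof.
move=> H F G; apply/ffunP => i; rewrite !ffunE.
case: ifP => _; last by [].
by rewrite H addrACA.
Qed.

Lemma back_step_inj n (c : circuit n) l : (0 < l <= depth c)%N ->
  injective (@back_step n c l).
Proof.
move=> /andP[l0 ld] F G H.
have El : nat_of_ord (inord l : 'I_(depth c).+1) = l by rewrite inordK.
have Hl : F (inord l) = G (inord l).
  have := congr1 (fun F : fault c => F (inord l)) H; rewrite /= !ffunE El.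
  by case: l l0 {ld El H} => // l _; rewrite /= eqn_leq ltnn.
apply/ffunP => i; have := congr1 (fun F : fault c => F i) H; rewrite /= !ffunE.
case: ifP => _ //; rewrite Hl; exact: addIr.
Qed.

Lemma back_cumulant_inj n (c : circuit n) : injective (@back_cumulant n c).
Proof.
rewrite /back_cumulant.
have : all (fun l => 0 < l <= depth c)%N (rev (iota 1 (depth c))).
  apply/allP => l; rewrite mem_rev mem_iota; case/andP => H1 H2.
  by rewrite H1 /=; rewrite add1n ltnS in H2.
elim: (rev _) => [|l s IH] /=; first by move=> _ F G.
move=> /andP[Hl Hs] F G /(IH Hs). exact: (@back_step_inj n c l Hl F G).
Qed.

Lemma back_cumulant_morph n (c : circuit n) :
  (forall l, {morph conjU c l : P Q / P + Q}) ->
  {morph @back_cumulant n c : F G / F + G}.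
Proof.
move=> H; rewrite /back_cumulant.
elim: (rev _) => [|l s IH] //= F G.
by rewrite back_step_morph.
Qed.

Lemma F_of_morph n (c : circuit n) : {morph @F_of n c : u v / u + v}.
Proof.
move=> u v; apply/ffunP => i; rewrite !ffunE -big_split /=.
apply: eq_bigr => j _; rewrite ffunE.
case: (F2_cases (u j)) => ->; case: (F2_cases (v j)) => ->;
  rewrite ?add0r ?addr0 ?F2_self //= ?addr0 ?add0r //.
by rewrite pauli_self.
Qed.

Lemma meas_at2 n (c : circuit n) j j' :
  (j < nmeas c)%N -> (j' < nmeas c)%N -> exists i i',
  [/\ (i < size c)%N, (i' < size c)%N,
      nth (Meas 0%R, 0%N) c i = (Meas (meas_S c j), meas_l c j),
      nth (Meas 0%R, 0%N) c i' = (Meas (meas_S c j'), meas_l c j') &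
      (i = i' -> j = j')].
Proof.
rewrite /nmeas /meas_list => Hj Hj'.
have [i [H1 H2 H3]] := pmap_idx (Meas 0%R, 0%N) (0%R, 0%N) Hj.
have [i' [H1' H2' H3']] := pmap_idx (Meas 0%R, 0%N) (0%R, 0%N) Hj'.
exists i, i'; split => //.
- move: H2; rewrite /meas_S /meas_l /meas_list.
  by case: (nth _ c i) => [[A g|Sm] l] //= [<-].
- move: H2'; rewrite /meas_S /meas_l /meas_list.
  by case: (nth _ c i') => [[A g|Sm] l] //= [<-].
- by move=> E; rewrite H3 H3' E.
Qed.

Lemma F_of_zero n (c : circuit n) : valid_circuit c ->
  forall w, @F_of n c w = 0 -> w = 0.
Proof.
case=> Hpos _ Hdisj _ Hnz w Hw.
move/(all_nthP (Meas 0%R, 0%N)): Hpos => Hpos.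
apply/ffunP => j; rewrite ffunE.
case: (F2_cases (w j)) => // Hwj; exfalso.
have [i [i' [Hi _ Ei _ _]]] := meas_at2 (ltn_ord j) (ltn_ord j).
set S := meas_S c j in Ei *. set l := meas_l c j in Ei *.
have Snz : S != 0 by apply: (Hnz S l); exists i.
have l0 : (0 < l)%N by have := Hpos i Hi; rewrite Ei.
have ld : (l <= depth c)%N by have := depth_ge Hi; rewrite Ei.
have [q Hq] : exists q, S q != 0.
  apply/existsP; apply: contraR Snz => /existsPn H0.
  apply/eqP/ffunP => q; rewrite ffunE; move: (H0 q) => /negPn/eqP //.
pose k : 'I_(depth c).+1 := inord l.-1.
have Ek : nat_of_ord k = l.-1.
  by rewrite inordK // ltnS (leq_trans (leq_pred _) ld).
have := congr1 (fun F : fault c => F k q) Hw.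
rewrite /= ffunE sum_ffunE (bigD1 j) /=; last by rewrite Ek.
rewrite Hwj eqxx big1 ?addr0.
  by rewrite !ffunE; move/eqP; rewrite (negbTE Hq).
move=> j' /andP[Hlev Hne]; case: ifP => _; last by rewrite ffunE.
have [i1 [i2 [Hi1 Hi2 E1 E2 Hneq]]] := meas_at2 (ltn_ord j) (ltn_ord j').
have l0' : (0 < meas_l c j')%N by have := Hpos i2 Hi2; rewrite E2.
have Hl' : meas_l c j' = l.
  move: Hlev; rewrite Ek -/l.
  by case: (meas_l c j') l0' => // a _; case: (l) l0 => // b _ /= /eqP ->.
apply/eqP; apply/negPn; apply/negP => Hq'.
have qA : q \in psupport S by rewrite inE.
have qB : q \in psupport (meas_S c j') by rewrite inE.
case: (ltngtP i1 i2) => H12.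
- have := Hdisj i1 i2; rewrite H12 Hi2 E1 E2 Hl' /= => /(_ erefl erefl) D.
  by rewrite (disjointFr D qA) in qB.
- have := Hdisj i2 i1; rewrite H12 Hi1 E1 E2 Hl' /= => /(_ erefl erefl) D.
  by rewrite (disjointFl D qA) in qB.
- have := Hneq H12 => /val_inj E; by rewrite E eqxx in Hne.
Qed.

Theorem mainTheorem9 (n : nat) (c : circuit n) :
  valid_circuit c ->
  {morph (fun u : {ffun 'I_(nmeas c) -> 'F_2} => back_cumulant (F_of u)) : u v / u + v}
  /\ injective (fun u : {ffun 'I_(nmeas c) -> 'F_2} => back_cumulant (F_of u)).
Proof.
move=> Hv.
have Hc : forall l, {morph conjU c l : P Q / P + Q}.
  move=> l; apply: conjU_morph => i A g Hi E.
  case: Hv => _ _ _ Hg _.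
  have [] := Hg A g (nth (Meas 0%R, 0%N) c i).2 => //.
  by exists i => //; rewrite -E; case: (nth _ c i).
split.
  by move=> u v /=; rewrite F_of_morph back_cumulant_morph.
move=> u v /= /back_cumulant_inj H.
have : F_of (u + v) = 0 by rewrite F_of_morph H fault_self.
move/(F_of_zero Hv) => H0.
apply/ffunP => j; have := congr1 (fun f : {ffun 'I_(nmeas c) -> 'F_2} => f j) H0; rewrite !ffunE => E.
by rewrite -[v j]add0r -E -addrA F2_self addr0.
Qed.
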